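(* The operad $\mathrm{Prim}\,\mathcal Mag$ (and also the operad $\mathrm{Prim}\,\mathcal Mag_\omega$) cannot be generated by binary and ternary operations; i.e. $\mathrm{Prim}\,\mathcal Mag(4)$ (resp. $\mathrm{Prim}\,\mathcal Mag_\omega(4)$) is not contained in the span of the elements obtained from elements of arity $2$ and $3$ by iterated operadic composition (substitution) and the symmetric group actions.
   Context: $K$ is a field of characteristic $0$. A planar rooted tree is reduced if no vertex has exactly one incoming edge. $K\{x_1,\dots,x_n\}_\infty$ is the $K$-vector space with basis the empty tree $1$ and all planar reduced rooted trees with leaves labelled by $x_1,\dots,x_n$; for $k\ge2$, $\vee^k$ grafts $k$ nonempty trees (in order) onto a new root, extended multilinearly, with unit conventions (arguments $1$ omitted, $\vee^1=\mathrm{id}$, $\vee^k(1,\dots,1)=1$); it is the free unitary $\mathcal Mag_\omega$-algebra. $K\{x_1,\dots,x_n\}$ is its subspace spanned by $1$ and binary trees, the free unitary magma algebra with $a\cdot b=\vee^2(a,b)$. Tensor squares carry the operations componentwise, and the co-addition $\Delta_a$ is the unique unital homomorphism with $\Delta_a(x_i)=x_i\otimes1+1\otimes x_i$; $f$ is primitive if $\Delta_a(f)=f\otimes1+1\otimes f$. $\mathrm{Prim}\,\mathcal Mag(n)$ (resp. $\mathrm{Prim}\,\mathcal Mag_\omega(n)$) is the space of primitive multilinear elements of degree $n$ in $x_1,\dots,x_n$ of $K\{x_1,\dots,x_n\}$ (resp. $K\{x_1,\dots,x_n\}_\infty$); these form operads whose composition is substitution of primitive elements for the variables, with $\Sigma_n$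 acting by permuting variables. *)

(* Defs.v *)
From HB Require Import structures.
From mathcomp Require Import all_boot all_algebra all_fingroup.
From mathcomp Require Import finmap.
From mathcomp.multinomials Require Import monalg.

Set Implicit Arguments.
Unset Strict Implicit.
Unset Printing Implicit Defensive.

Import GRing.Theory.
Local Open Scope ring_scope.

(* Planar rooted trees with leaves labelled by naturals (leaf [PLeaf i]
   stands for the variable x_i; variables are indexed from 0, so
   "multilinear of degree n in x_1..x_n" becomes "in x_0..x_(n-1)").
   [PEmpty] is the empty tree 1; [PNode ts] is the planar tree whose root
   has the children ts (in order). Only "valid" trees are used as basis
   elements: PEmpty, or reduced nonempty trees (see [reduced]). *)
Inductive ptree := PEmpty | PLeaf of nat | PNode of seq ptree.

Fixpoint ptree_enc (t : ptree) : GenTree.tree nat :=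
  match t with
  | PEmpty => GenTree.Node 0 [::]
  | PLeaf n => GenTree.Leaf n
  | PNode ts => GenTree.Node 1 (map ptree_enc ts)
  end.

Fixpoint ptree_dec (g : GenTree.tree nat) : ptree :=
  match g with
  | GenTree.Leaf n => PLeaf n
  | GenTree.Node 0 _ => PEmpty
  | GenTree.Node _ gs => PNode (map ptree_dec gs)
  end.

Fixpoint ptree_encK (t : ptree) : ptree_dec (ptree_enc t) = t :=
  match t with
  | PEmpty => erefl
  | PLeaf n => erefl
  | PNode ts =>
      f_equal PNode
        ((fix F (s : seq ptree) : map ptree_dec (map ptree_enc s) = s :=
            match s with
            | [::] => erefl
            | x :: s' => f_equal2 cons (ptree_encK x) (F s')
            end) ts)
  end.

HB.instance Definition _ := Countable.copy ptree (can_type ptree_encK).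

Fixpoint reduced (t : ptree) : bool :=
  match t with
  | PEmpty => false
  | PLeaf _ => true
  | PNode ts => (1 < size ts)%N && all reduced ts
  end.

Fixpoint binary (t : ptree) : bool :=
  match t with
  | PNode ts => (size ts == 2)%N && all binary ts
  | _ => true
  end.

Fixpoint leaves (t : ptree) : seq nat :=
  match t with
  | PEmpty => [::]
  | PLeaf i => [:: i]
  | PNode ts => flatten (map leaves ts)
  end.

(* grafting on a new root, with the unit conventions: empty trees are
   omitted, grafting one tree is the identity, grafting none gives 1 *)
Definition graft (ts : seq ptree) : ptree :=
  match [seq t <- ts | t != PEmpty] with
  | [::] => PEmpty
  | [:: t] => t
  | ts' => PNode ts'
  end.

Definition graft2 (ps : seq (ptree * ptree)) : ptree * ptree :=
  (graft (map fst ps), graft (map snd ps)).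

Section Algebra.
Variable K : fieldType.

Fixpoint lin_lists (X : choiceType) (fs : seq {malg K[X]}) : seq (K * seq X) :=
  match fs with
  | [::] => [:: (1, [::])]
  | f :: fs' =>
      [seq (f@_x * c.1, x :: c.2) | x <- (msupp f : seq X), c <- lin_lists fs']
  end.

Definition mlin (X : choiceType) (g : seq X -> X) (fs : seq {malg K[X]})
  : {malg K[X]} :=
  \sum_(c <- lin_lists fs) c.1 *: << g c.2 >>.

Definition Alg := @malg ptree K.
(* its tensor square, with basis the pairs of trees *)
Definition Alg2 := @malg (ptree * ptree)%type K.

Definition tr (t : ptree) : Alg := << t >>.
Definition xvar (i : nat) : Alg := tr (PLeaf i).
Definition one : Alg := tr PEmpty.

Definition vee (fs : seq Alg) : Alg := mlin graft fs.
Definition vee2 (fs : seq Alg2) : Alg2 := mlin graft2 fs.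

Definition linext (X : choiceType) (h : ptree -> {malg K[X]}) (f : Alg)
  : {malg K[X]} := \sum_(t <- (msupp f : seq ptree)) f@_t *: h t.

(* the co-addition: the unital Mag_omega-algebra homomorphism with
   x_i |-> x_i (x) 1 + 1 (x) x_i *)
Fixpoint delta_t (t : ptree) : Alg2 :=
  match t with
  | PEmpty => << (PEmpty, PEmpty) >>
  | PLeaf i => << (PLeaf i, PEmpty) >> + << (PEmpty, PLeaf i) >>
  | PNode ts => vee2 (map delta_t ts)
  end.

Definition coadd (f : Alg) : Alg2 := linext delta_t f.

Definition tens_one (f : Alg) : Alg2 := linext (fun t => << (t, PEmpty) >>) f.
Definition one_tens (f : Alg) : Alg2 := linext (fun t => << (PEmpty, t) >>) f.

Definition primitive (f : Alg) : Prop := coadd f = tens_one f + one_tens f.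

Definition multilinear (n : nat) (f : Alg) : Prop :=
  forall t, t \in msupp f -> reduced t && perm_eq (leaves t) (iota 0 n).

Definition in_Mag (f : Alg) : Prop := forall t, t \in msupp f -> binary t.

Definition PrimMag (n : nat) (f : Alg) : Prop :=
  [/\ multilinear n f, in_Mag f & primitive f].

Definition PrimMagw (n : nat) (f : Alg) : Prop :=
  multilinear n f /\ primitive f.

Fixpoint subst_t (s : nat -> Alg) (t : ptree) : Alg :=
  match t with
  | PEmpty => one
  | PLeaf i => s i
  | PNode ts => vee (map (subst_t s) ts)
  end.

Definition subst (s : nat -> Alg) (f : Alg) : Alg := linext (subst_t s) f.

Definition rename (r : nat -> nat) (f : Alg) : Alg :=
  subst (fun i => xvar (r i)) f.

(* operadic composition f(g_0, ..., g_(k-1)) where g_i has arity ns_i: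
   the variables of g_i are shifted by ns_0 + ... + ns_(i-1) *)
Definition ocomp (f : Alg) (gs : seq Alg) (ns : seq nat) : Alg :=
  subst (fun i => rename (addn (sumn (take i ns))) (nth 0 gs i)) f.

Definition perm_nat (n : nat) (s : 'S_n) (j : nat) : nat :=
  if @insub nat (fun j => (j < n)%N) _ j is Some i then val (s i) else j.

(* the span of what is obtained from the elements of arity 2 and 3 of the
   family P by iterated operadic composition and symmetric group actions
   (the suboperad generated by P(2) and P(3), identity included) *)
Inductive gen23 (P : nat -> Alg -> Prop) : nat -> Alg -> Prop :=
  | gen23_id : gen23 P 1 (xvar 0)
  | gen23_2 f : P 2%N f -> gen23 P 2 f
  | gen23_3 f : P 3%N f -> gen23 P 3 f
  | gen23_comp k f (gs : seq Alg) (ns : seq nat) :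
      gen23 P k f -> size gs = k -> size ns = k ->
      (forall i, (i < k)%N -> gen23 P (nth 0%N ns i) (nth 0 gs i)) ->
      gen23 P (sumn ns) (ocomp f gs ns)
  | gen23_perm n f (s : 'S_n) :
      gen23 P n f -> gen23 P n (rename (perm_nat s) f)
  | gen23_0 n : gen23 P n 0
  | gen23_lin n (a : K) f g :
      gen23 P n f -> gen23 P n g -> gen23 P n (a *: f + g).

End Algebra.

(* Main.v *)
Require Import Defs.
From mathcomp Require Import all_boot all_algebra all_fingroup.
From mathcomp Require Import finmap.
From mathcomp.multinomials Require Import monalg.
From mathcomp Require Import zify.

Set Implicit Arguments.
Unset Strict Implicit.
Unset Printing Implicit Defensive.
Import GRing.Theory.
Local Open Scope ring_scope.


Fixpoint allT (P : ptree -> Prop) (ts : seq ptree) : Prop :=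
  match ts with [::] => True | t :: ts' => P t /\ allT P ts' end.

Definition ptree_ind2 (P : ptree -> Prop) (H0 : P PEmpty)
  (H1 : forall i, P (PLeaf i)) (H2 : forall ts, allT P ts -> P (PNode ts)) :=
  fix F (t : ptree) : P t :=
    match t with
    | PEmpty => H0
    | PLeaf i => H1 i
    | PNode ts => H2 ts ((fix G (s : seq ptree) : allT P s :=
        match s with [::] => I | x :: s' => conj (F x) (G s') end) ts)
    end.

Lemma allP_in P ts : allT P ts -> forall t, t \in ts -> P t.
Proof.
elim: ts => [|x s IH] //= [Px Ps] t; rewrite in_cons => /orP [/eqP -> //|].
exact: IH.
Qed.

Section Lin.
Variable K : fieldType.

Definition lx (Y X : choiceType) (h : Y -> {malg K[X]}) (f : {malg K[Y]}) :
  {malg K[X]} := \sum_(y <- msupp f) f@_y *: h y.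

Section LX.
Variables (Y X : choiceType).
Implicit Types (h : Y -> {malg K[X]}) (f g : {malg K[Y]}).

Lemma lxEw h f (d : {fset Y}) : (msupp f `<=` d)%fset ->
  lx h f = \sum_(y <- d) f@_y *: h y.
Proof.
move=> le; rewrite /lx (big_fset_incl _ le) //= => x xd /mcoeff_outdom ->.
by rewrite scale0r.
Qed.

Lemma lxU h y : lx h << y >> = h y.
Proof. by rewrite (lxEw _ msuppU_le) big_seq_fset1 mcoeffUU scale1r. Qed.

Lemma lxUc h y c : lx h << c *g y >> = c *: h y.
Proof. by rewrite (lxEw _ msuppU_le) big_seq_fset1 mcoeffUU. Qed.

Lemma lx0 h : lx h 0 = 0.
Proof. by rewrite /lx msupp0 big_seq_fset0. Qed.

Lemma lxD h f g : lx h (f + g) = lx h f + lx h g.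
Proof.
rewrite (lxEw h (msuppD_le f g)) (lxEw h (fsubsetUl (msupp f) (msupp g))).
rewrite (lxEw h (fsubsetUr (msupp f) (msupp g))) -big_split /=.
by apply: eq_bigr => y _; rewrite mcoeffD scalerDl.
Qed.

Lemma lxZ h c f : lx h (c *: f) = c *: lx h f.
Proof.
rewrite (lxEw h (msuppZ_le c f)) /lx scaler_sumr; apply: eq_bigr => y _.
by rewrite mcoeffZ scalerA.
Qed.

Lemma lxN h f : lx h (- f) = - lx h f.
Proof. by rewrite -scaleN1r lxZ scaleN1r. Qed.

Lemma lxB h f g : lx h (f - g) = lx h f - lx h g.
Proof. by rewrite lxD lxN. Qed.

Lemma lx_sum h I (r : seq I) (F : I -> {malg K[Y]}) :
  lx h (\sum_(i <- r) F i) = \sum_(i <- r) lx h (F i).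
Proof.
elim: r => [|i r IH]; first by rewrite !big_nil lx0.
by rewrite !big_cons lxD IH.
Qed.

Lemma lx_ext h1 h2 f : (forall y, h1 y = h2 y) -> lx h1 f = lx h2 f.
Proof. by move=> E; apply: eq_bigr => y _; rewrite E. Qed.

Lemma lx_ext_in h1 h2 f : (forall y, y \in msupp f -> h1 y = h2 y) ->
  lx h1 f = lx h2 f.
Proof. by move=> E; rewrite /lx big_seq_cond [RHS]big_seq_cond;
  apply: eq_bigr => y /andP[yf _]; rewrite E. Qed.

Lemma lx_sumf I (r : seq I) (a : I -> K) (F : I -> Y -> {malg K[X]}) f :
  lx (fun y => \sum_(i <- r) a i *: F i y) f = \sum_(i <- r) a i *: lx (F i) f.
Proof.
rewrite /lx (eq_bigr (fun y => \sum_(i <- r) f@_y *: (a i *: F i y))); last first.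
  by move=> y _; rewrite scaler_sumr.
rewrite exchange_big /=; apply: eq_bigr => i _.
rewrite scaler_sumr; apply: eq_bigr => y _.
by rewrite !scalerA mulrC.
Qed.

Lemma lx_addf h1 h2 f : lx (fun y => h1 y + h2 y) f = lx h1 f + lx h2 f.
Proof. by rewrite /lx -big_split; apply: eq_bigr => y _; rewrite scalerDr. Qed.

Lemma lx_scalef c h f : lx (fun y => c *: h y) f = c *: lx h f.
Proof. by rewrite /lx scaler_sumr; apply: eq_bigr => y _; rewrite !scalerA mulrC. Qed.

End LX.

Lemma lx_id (Y : choiceType) (f : {malg K[Y]}) : lx (fun y => << y >>) f = f.
Proof.
rewrite [RHS]monalgE; apply: eq_bigr => y _.
apply/malgP => k; rewrite mcoeffZ !mcoeffU; case: eqP => _; by rewrite ?mulr1 ?mulr0.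
Qed.

Lemma lx_lx (Y Z X : choiceType) (Q : Z -> {malg K[X]}) (phi : Y -> {malg K[Z]}) f :
  lx Q (lx phi f) = lx (fun y => lx Q (phi y)) f.
Proof. by rewrite [lx phi f]/lx lx_sum; apply: eq_bigr => y _; rewrite lxZ. Qed.

Section Mlin.
Variable X : choiceType.

Lemma mlin_nil (g : seq X -> X) : @mlin K X g [::] = << g [::] >>.
Proof. by rewrite /mlin /= big_seq1 scale1r. Qed.

Lemma mlin_cons (g : seq X -> X) f fs :
  mlin g (f :: fs) = lx (fun x => mlin (fun l => g (x :: l)) fs) f.
Proof.
rewrite /mlin /= big_allpairs_dep /lx; apply: eq_bigr => x _.
by rewrite scaler_sumr; apply: eq_bigr => c _; rewrite scalerA.
Qed.

Lemma mlin_ext (g1 g2 : seq X -> X) (fs : seq {malg K[X]}) : (forall l, g1 l = g2 l) ->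
  mlin g1 fs = mlin g2 fs.
Proof. by move=> E; apply: eq_bigr => c _; rewrite E. Qed.

Lemma mlin_U (g : seq X -> X) (xs : seq X) :
  mlin g (map (fun x => << x >> : {malg K[X]}) xs) = << g xs >>.
Proof.
elim: xs g => [|x xs IH] g /=; first exact: mlin_nil.
by rewrite mlin_cons lxU IH.
Qed.

Lemma mlin_expand (Y : choiceType) (phi : Y -> {malg K[X]}) (g : seq X -> X) (fs : seq {malg K[Y]}) :
  mlin g (map (lx phi) fs) =
  \sum_(c <- lin_lists fs) c.1 *: mlin g (map phi c.2).
Proof.
elim: fs g => [|f fs IH] g /=; first by rewrite big_seq1 scale1r.
rewrite mlin_cons (lx_ext _ (fun z => IH (fun l => g (z :: l)))).
rewrite lx_lx big_allpairs_dep {1}/lx; apply: eq_bigr => x _ /=.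
rewrite lx_sumf scaler_sumr; apply: eq_bigr => c _.
by rewrite -mlin_cons scalerA.
Qed.

End Mlin.
End Lin.


Lemma graft_filter ts : graft ts = graft [seq t <- ts | t != PEmpty].
Proof. by rewrite /graft filter_id. Qed.

Lemma graft1 t : graft [:: t] = t.
Proof. by rewrite /graft /=; case: ifP => [//|/negbFE/eqP ->]. Qed.

Lemma graft_ins n xs : graft (take n xs ++ PEmpty :: drop n xs) = graft xs.
Proof.
by rewrite graft_filter [RHS]graft_filter filter_cat /= -filter_cat cat_take_drop.
Qed.

Section Tree.
Variable K : fieldType.
Implicit Types (s a : nat -> Alg K) (f g : Alg K) (fs : seq (Alg K)).

Lemma mlin_ins (X : choiceType) (g : seq X -> X) x0 (fs1 fs2 : seq {malg K[X]}) :
  mlin g (fs1 ++ << x0 >> :: fs2) =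
  mlin (fun l => g (take (size fs1) l ++ x0 :: drop (size fs1) l)) (fs1 ++ fs2).
Proof.
elim: fs1 g => [|f fs1 IH] g /=.
  by rewrite mlin_cons lxU; apply: mlin_ext => l; rewrite take0 drop0.
by rewrite !mlin_cons; apply: lx_ext => x; rewrite IH.
Qed.

Lemma vee_drop1 (fs1 fs2 : seq (Alg K)) :
  vee (fs1 ++ Defs.one K :: fs2) = vee (fs1 ++ fs2).
Proof. by rewrite /vee /Defs.one /tr mlin_ins; apply: mlin_ext => l; apply: graft_ins. Qed.

Lemma vee1 (f : Alg K) : vee [:: f] = f.
Proof.
rewrite /vee mlin_cons -[RHS]lx_id; apply: lx_ext => x.
by rewrite mlin_nil graft1.
Qed.

Lemma vee0 : vee [::] = Defs.one K.
Proof. by rewrite /vee mlin_nil. Qed.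

Lemma vee_filter (F : ptree -> Alg K) : F PEmpty = Defs.one K ->
  forall ts pre, vee (pre ++ map F ts) = vee (pre ++ map F [seq t <- ts | t != PEmpty]).
Proof.
move=> FE; elim=> [|t ts IH] pre //=.
case: ifP => [_|/negbFE/eqP ->] /=.
  by rewrite -!cat_rcons IH.
by rewrite FE vee_drop1 IH.
Qed.

Lemma linextE (X : choiceType) (h : ptree -> {malg K[X]}) f : linext h f = lx h f.
Proof. by []. Qed.

Lemma subst_tr s t : subst s (tr K t) = subst_t s t.
Proof. exact: lxU. Qed.

Lemma subst0 s : subst s 0 = 0. Proof. exact: lx0. Qed.
Lemma substD s f g : subst s (f + g) = subst s f + subst s g. Proof. exact: lxD. Qed.
Lemma substZ s c f : subst s (c *: f) = c *: subst s f. Proof. exact: lxZ. Qed.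
Lemma substN s f : subst s (- f) = - subst s f. Proof. exact: lxN. Qed.

Lemma subst_graft s ts : subst_t s (graft ts) = vee (map (subst_t s) ts).
Proof.
rewrite -[vee _]/(vee ([::] ++ _)) (@vee_filter (subst_t s)) //= /graft.
case: [seq t <- ts | t != PEmpty] => [|t1 [|t2 r]] /=.
- by rewrite vee0.
- by rewrite vee1.
- by [].
Qed.

Lemma subst_vee s fs : subst s (vee fs) = vee (map (subst s) fs).
Proof.
rewrite {1}/vee /mlin /subst linextE lx_sum.
rewrite -[map _ fs]/(map (lx (subst_t s)) fs) /vee mlin_expand.
apply: eq_bigr => c _; rewrite lxZ lxU subst_graft //.
Qed.

Lemma subst_t_ext (s1 s2 : nat -> Alg K) t : (forall i, s1 i = s2 i) -> subst_t s1 t = subst_t s2 t.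
Proof.
move=> E; elim/ptree_ind2: t => [|i|ts IH] //=.
by congr (vee _); apply/eq_in_map => t /(allP_in IH).
Qed.

Lemma subst_ext (s1 s2 : nat -> Alg K) f : (forall i, s1 i = s2 i) -> subst s1 f = subst s2 f.
Proof. by move=> E; apply: lx_ext => t; apply: subst_t_ext. Qed.

Lemma subst_subst_t s (s' : nat -> Alg K) t :
  subst s (subst_t s' t) = subst_t (fun i => subst s (s' i)) t.
Proof.
elim/ptree_ind2: t => [|i|ts IH] /=.
- by rewrite /Defs.one subst_tr.
- by [].
- rewrite subst_vee -map_comp; congr (vee _); apply/eq_in_map => t /(allP_in IH).
  by [].
Qed.

Lemma subst_subst s (s' : nat -> Alg K) f :
  subst s (subst s' f) = subst (fun i => subst s (s' i)) f.
Proof.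
rewrite {2}/subst linextE /subst !linextE lx_lx.
by apply: lx_ext => t; rewrite -(subst_subst_t s s' t).
Qed.

Lemma subst_rename a r f : subst a (rename r f) = subst (fun i => a (r i)) f.
Proof.
by rewrite /rename subst_subst; apply: subst_ext => i; rewrite /xvar subst_tr.
Qed.

End Tree.


Definition nl t := size (leaves t).

Fixpoint allP2 (A B : Type) (R : A -> B -> Prop) (xs : seq A) (ys : seq B) : Prop :=
  match xs, ys with
  | [::], [::] => True
  | x :: xs', y :: ys' => R x y /\ allP2 R xs' ys'
  | _, _ => False
  end.

Lemma leaves_filter ts :
  flatten (map leaves [seq t <- ts | t != PEmpty]) = flatten (map leaves ts).
Proof. by elim: ts => [|t ts IH] //=; case: ifP => [_|/negbFE/eqP ->] /=; rewrite IH. Qed.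

Lemma leaves_graft ts : leaves (graft ts) = flatten (map leaves ts).
Proof.
rewrite -leaves_filter /graft.
by case: [seq t <- ts | t != PEmpty] => [|t1 [|t2 r]] //=; rewrite cats0.
Qed.

Lemma nl_graft ts : nl (graft ts) = sumn (map nl ts).
Proof. by rewrite /nl leaves_graft size_flatten /shape -map_comp. Qed.

Lemma nl_node ts : nl (PNode ts) = sumn (map nl ts).
Proof. by rewrite /nl /= size_flatten /shape -map_comp. Qed.

Definition Asz n := (n == 1)%N || (3 <= n)%N.
Definition Psum k n := exists l : seq nat, [/\ size l = k, all Asz l & sumn l = n].

Lemma Psum_add a n b m : Psum a n -> Psum b m -> Psum (a + b)%N (n + m)%N.
Proof.
move=> [l1 [s1 a1 e1]] [l2 [s2 a2 e2]]; exists (l1 ++ l2).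
split; [by rewrite size_cat s1 s2 | by rewrite all_cat a1 a2 | by rewrite sumn_cat e1 e2].
Qed.

Section SPsec.
Variable K : fieldType.

Definition SP (X : choiceType) (P : X -> Prop) (f : {malg K[X]}) :=
  forall t, t \in msupp f -> P t.

Section SPX.
Variables (X : choiceType) (P : X -> Prop).
Implicit Types (f g : {malg K[X]}).

Lemma SP0 : SP P (0 : {malg K[X]}).
Proof. by move=> t; rewrite msupp0. Qed.

Lemma SPD f g : SP P f -> SP P g -> SP P (f + g).
Proof.
move=> Hf Hg t /(fsubsetP (msuppD_le f g)); rewrite in_fsetU => /orP [].
exact: Hf. exact: Hg.
Qed.

Lemma SPZ c f : SP P f -> SP P (c *: f).
Proof. by move=> Hf t /(fsubsetP (msuppZ_le c f)); apply: Hf. Qed.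

Lemma SPN f : SP P f -> SP P (- f).
Proof. by move=> Hf t; rewrite msuppN; apply: Hf. Qed.

Lemma SPB f g : SP P f -> SP P g -> SP P (f - g).
Proof. by move=> Hf Hg; apply: SPD => //; apply: SPN. Qed.

Lemma SPU x : P x -> SP P (<< x >> : {malg K[X]}).
Proof. by move=> Px t /(fsubsetP msuppU_le); rewrite in_fset1 => /eqP ->. Qed.

Lemma SP_sum (I : eqType) (r : seq I) (F : I -> {malg K[X]}) :
  (forall i, i \in r -> SP P (F i)) -> SP P (\sum_(i <- r) F i).
Proof.
elim: r => [|i r IH] H; first by rewrite big_nil; apply: SP0.
rewrite big_cons; apply: SPD; first by apply: H; rewrite mem_head.
by apply: IH => j jr; apply: H; rewrite in_cons jr orbT.
Qed.

Lemma SP_lx (Y : choiceType) (h : Y -> {malg K[X]}) (f : {malg K[Y]}) :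
  (forall y, y \in msupp f -> SP P (h y)) -> SP P (lx h f).
Proof. by move=> H; apply: SP_sum => y yf; apply: SPZ; apply: H. Qed.

Lemma lin_lists_mem (fs : seq {malg K[X]}) c :
  c \in lin_lists fs -> allP2 (fun x f => x \in msupp f) c.2 fs.
Proof.
elim: fs c => [|f fs IH] c /=; first by rewrite inE => /eqP ->.
by case/allpairsPdep => x [c' [xf c'f ->]] /=; split=> //; apply: IH.
Qed.

Lemma SP_mlin (g : seq X -> X) (fs : seq {malg K[X]}) :
  (forall xs, allP2 (fun x f => x \in msupp f) xs fs -> P (g xs)) ->
  SP P (mlin g fs).
Proof.
move=> H; apply: SP_sum => c /lin_lists_mem Hc; apply: SPZ; apply: SPU.
exact: H.
Qed.
End SPX.

Lemma subst_sizes (a : nat -> Alg K) t :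
  (forall i, SP (fun u => Asz (nl u)) (a i)) ->
  SP (fun u => Psum (nl t) (nl u)) (subst_t a t).
Proof.
move=> Ha; elim/ptree_ind2: t => [|i|ts IH] /=.
- by apply: SPU; exists [::].
- by move=> u /Ha Hu; exists [:: nl u]; rewrite /= Hu addn0.
- apply: SP_mlin => xs Hxs; rewrite nl_graft nl_node.
  elim: ts xs IH Hxs => [|t ts IHts] [|x xs] //=; first by exists [::].
  move=> [Ht Hts] [Hx Hxs].
  exact: Psum_add (Ht _ Hx) (IHts _ Hts Hxs).
Qed.

Definition L0 := PLeaf 0.
Definition T2 := PNode [:: L0; L0].
Definition Tst := PNode [:: T2; T2].
Definition yv : Alg K := tr K L0.

Definition goodt t := ((3 <= nl t)%N && (t != Tst)).
Definition good (m : Alg K) := SP goodt m.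
Definition W (w : Alg K) := exists c : K, good (w - c *: yv).

Lemma W_Asz w : W w -> SP (fun u => Asz (nl u)) w.
Proof.
move=> [c Hc]; rewrite -(subrK (c *: yv) w); apply: SPD.
  by move=> u /Hc /andP [h _]; rewrite /Asz h orbT.
by apply: SPZ; apply: SPU.
Qed.

Lemma W0 : W 0.
Proof. by exists 0; rewrite scale0r subr0; apply: SP0. Qed.

Lemma W_lin (c : K) f g : W f -> W g -> W (c *: f + g).
Proof.
move=> [cf Hf] [cg Hg]; exists (c * cf + cg).
have -> : c *: f + g - (c * cf + cg) *: yv = c *: (f - cf *: yv) + (g - cg *: yv).
  by rewrite scalerBr scalerA scalerDl opprD addrACA.
by apply: SPD => //; apply: SPZ.
Qed.

Lemma W_y : W yv.
Proof. by exists 1; rewrite scale1r subrr; apply: SP0. Qed.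

Lemma nl_Tst : nl Tst = 4%N. Proof. by []. Qed.

Lemma W_p3 (f : Alg K) a : multilinear 3 f -> (forall i, W (a i)) -> W (subst a f).
Proof.
move=> Hf Ha; exists 0; rewrite scale0r subr0.
apply: SP_lx => t /Hf /andP [_ /perm_size Ht].
have : SP (fun u => Psum (nl t) (nl u)) (subst_t a t).
  by apply: subst_sizes => i; apply: W_Asz.
move=> H u /H [l [sl al el]]; move: sl; rewrite /nl Ht size_iota => sl.
rewrite -/(nl u).
apply/andP; split.
  case: l sl al el => [|x [|y [|z [|]]]] //= _ /and4P [hx hy hz _] <-.
  by move: hx hy hz; rewrite /Asz; case/orP=> [/eqP->|hx] //; lia.
apply/eqP => eu; move: el; rewrite eu nl_Tst.
case: l sl al => [|x [|y [|z [|]]]] //= _ /and4P [hx hy hz _].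
by move: hx hy hz; rewrite /Asz => /orP [/eqP->|hx] /orP [/eqP->|hy] /orP [/eqP->|hz]; lia.
Qed.

End SPsec.


Fixpoint coefl (X : eqType) (l : seq (int * X)) (k : X) : int :=
  match l with
  | [::] => 0
  | p :: l' => (if p.2 == k then p.1 else 0) + coefl l' k
  end.

Definition checkeq (X : eqType) (l1 l2 : seq (int * X)) :=
  all (fun k => coefl l1 k == coefl l2 k) (map snd (l1 ++ l2)).

Fixpoint combs (X : Type) (ls : seq (seq (int * X))) : seq (int * seq X) :=
  match ls with
  | [::] => [:: (1, [::])]
  | l :: ls' => [seq (p.1 * c.1, p.2 :: c.2) | p <- l, c <- combs ls']
  end.

Fixpoint dcomp (t : ptree) : seq (int * (ptree * ptree)) :=
  match t with
  | PEmpty => [:: (1, (PEmpty, PEmpty))]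
  | PLeaf i => [:: (1, (PLeaf i, PEmpty)); (1, (PEmpty, PLeaf i))]
  | PNode ts => [seq (c.1, graft2 c.2) | c <- combs (map dcomp ts)]
  end.

Definition scl (X : Type) (a : int) (l : seq (int * X)) := [seq (a * q.1, q.2) | q <- l].

Section Interp.
Variable K : fieldType.

Definition interp (X : choiceType) (l : seq (int * X)) : {malg K[X]} :=
  \sum_(p <- l) (p.1)%:~R *: << p.2 >>.

Lemma coefl_notin (X : eqType) (l : seq (int * X)) k :
  k \notin map snd l -> coefl l k = 0.
Proof.
elim: l => [|p l IH] //=; rewrite in_cons negb_or => /andP [hp hl].
by rewrite IH // eq_sym (negbTE hp) addr0.
Qed.

Lemma interp_coef (X : choiceType) (l : seq (int * X)) k :
  (interp l)@_k = (coefl l k)%:~R.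
Proof.
elim: l => [|p l IH]; first by rewrite /interp big_nil mcoeff0.
rewrite /interp big_cons mcoeffD -/(interp l) IH mcoeffZ mcoeffU /= intrD.
by case: eqP => _; rewrite ?mulr1 ?mulr0.
Qed.

Lemma checkeqP (X : choiceType) (l1 l2 : seq (int * X)) :
  checkeq l1 l2 -> interp l1 = interp l2.
Proof.
move/allP => H; apply/malgP => k; rewrite !interp_coef.
case: (boolP (k \in map snd (l1 ++ l2))) => [/H /eqP -> //|].
by rewrite map_cat mem_cat negb_or => /andP [h1 h2]; rewrite !coefl_notin.
Qed.

Lemma interp_cat (X : choiceType) (l1 l2 : seq (int * X)) :
  interp (l1 ++ l2) = interp l1 + interp l2.
Proof. by rewrite /interp big_cat. Qed.

Lemma interp_scl (X : choiceType) a (l : seq (int * X)) :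
  interp (scl a l) = a%:~R *: interp l.
Proof.
rewrite /interp big_map scaler_sumr; apply: eq_bigr => p _.
by rewrite intrM scalerA.
Qed.

Lemma interp_flatten (X : choiceType) (ls : seq (seq (int * X))) :
  interp (flatten ls) = \sum_(l <- ls) interp l.
Proof.
elim: ls => [|l ls IH]; first by rewrite /interp !big_nil.
by rewrite [flatten _]/= interp_cat IH big_cons.
Qed.

Lemma mlin_interp (X : choiceType) (g : seq X -> X) (ls : seq (seq (int * X))) :
  mlin g (map (@interp X) ls) = interp [seq (c.1, g c.2) | c <- combs ls].
Proof.
elim: ls g => [|l ls IH] g /=.
  by rewrite mlin_nil /interp big_seq1 scale1r.
rewrite mlin_cons (lx_ext _ (fun x => IH (fun l => g (x :: l)))).
rewrite /interp lx_sum big_map big_allpairs_dep; apply: eq_bigr => p _.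
rewrite lxZ lxU big_map scaler_sumr; apply: eq_bigr => c _.
by rewrite intrM scalerA.
Qed.

Lemma i1 : ((1 : int)%:~R : K) = 1. Proof. exact: mulr1z. Qed.

Lemma interp1 (X : choiceType) (a : X) : interp [:: (1%Z, a)] = << a >>.
Proof. by rewrite /interp big_seq1 i1 scale1r. Qed.

Lemma interp2 (X : choiceType) (a b : X) :
  interp [:: (1%Z, a); (1%Z, b)] = << a >> + << b >>.
Proof. by rewrite /interp big_cons big_seq1 /= i1 scale1r scale1r. Qed.

Lemma dleaf (i : nat) : delta_t K (PLeaf i) = interp (dcomp (PLeaf i)).
Proof. by rewrite [dcomp _]/= interp2. Qed.

Lemma dempty : delta_t K PEmpty = interp (dcomp PEmpty).
Proof. by rewrite [dcomp _]/= interp1. Qed.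

Lemma delta_dcomp t : delta_t K t = interp (dcomp t).
Proof.
elim/ptree_ind2: t => [|i|ts IH].
- exact: dempty.
- exact: dleaf.
- rewrite /= /vee2.
  have -> : map (delta_t K) ts = map (@interp _) (map dcomp ts).
    by rewrite -map_comp; apply/eq_in_map => t /(allP_in IH).
  by rewrite mlin_interp /interp !big_map.
Qed.

Lemma coadd_interp (l : seq (int * ptree)) :
  coadd (interp l) = interp (flatten [seq scl p.1 (dcomp p.2) | p <- l]).
Proof.
rewrite interp_flatten big_map /coadd linextE /interp lx_sum; apply: eq_bigr => p _.
by rewrite lxZ lxU delta_dcomp -interp_scl.
Qed.

Lemma tens_one_interp (l : seq (int * ptree)) :
  tens_one (interp l) = interp [seq (p.1, (p.2, PEmpty)) | p <- l].
Proof.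
rewrite /tens_one linextE /interp lx_sum big_map; apply: eq_bigr => p _.
by rewrite lxZ lxU.
Qed.

Lemma one_tens_interp (l : seq (int * ptree)) :
  one_tens (interp l) = interp [seq (p.1, (PEmpty, p.2)) | p <- l].
Proof.
rewrite /one_tens linextE /interp lx_sum big_map; apply: eq_bigr => p _.
by rewrite lxZ lxU.
Qed.

End Interp.


Lemma red_pos t : reduced t -> (0 < nl t)%N.
Proof.
elim/ptree_ind2: t => [|i|ts IH] //= /andP [hs ha].
rewrite nl_node; case: ts hs ha IH => [|t ts] //= _ /andP [ht _] [IHt _].
have := IHt ht; lia.
Qed.

Lemma red1 t : reduced t -> nl t = 1%N -> exists i, t = PLeaf i.
Proof.
case: t => [|i|[|t1 [|t2 r]]] //=; first by exists i.
move=> /and3P [h1 h2 _]; rewrite nl_node /=.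
have := red_pos h1; have := red_pos h2; lia.
Qed.

Definition T01 := PNode [:: PLeaf 0; PLeaf 1].
Definition T10 := PNode [:: PLeaf 1; PLeaf 0].

Lemma red2 t : reduced t -> perm_eq (leaves t) [:: 0; 1]%N -> t = T01 \/ t = T10.
Proof.
move=> rt pe; have nlt : nl t = 2%N by rewrite /nl (perm_size pe).
case: t rt pe nlt => [|i|[|t1 [|t2 r]]] //=.
move=> /and3P [h1 h2 hr] pe; rewrite nl_node /= => nlt.
have p1 := red_pos h1; have p2 := red_pos h2.
have e1 : nl t1 = 1%N by lia.
have e2 : nl t2 = 1%N by lia.
case: r hr pe nlt => [|t3 r] /=; last first.
  by move=> /andP [h3 _]; have := red_pos h3; lia.
move=> _ pe _; case: (red1 h1 e1) => i ei; case: (red1 h2 e2) => j ej.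
move: pe; rewrite ei ej /= => pe.
have ui : uniq [:: i; j] by rewrite (perm_uniq pe).
have hi : i \in [:: 0; 1]%N by rewrite -(perm_mem pe) mem_head.
have hj : j \in [:: 0; 1]%N by rewrite -(perm_mem pe) !inE eqxx orbT.
move: hi hj ui; rewrite !inE => /orP [/eqP -> | /eqP ->] /orP [/eqP -> | /eqP ->] //= _.
- by left.
- by right.
Qed.

Definition firstleaf t := if t is PNode (PLeaf _ :: _) then true else false.
Definition lastleaf t := if t is PNode [:: _; PLeaf _] then true else false.

Lemma tmpAC (V : zmodType) (A B C : V) : A + B + C - A = B + C.
Proof. by rewrite addrC addrA addKr. Qed.

Section P2.
Variable K : fieldType.
Local Notation yv := (yv K).

Lemma p2_form (f : Alg K) : multilinear 2 f ->
  f = f@_T01 *: tr K T01 + f@_T10 *: tr K T10.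
Proof.
move=> Hf; apply/malgP => k; rewrite mcoeffD !mcoeffZ /tr !mcoeffU.
case: (eqVneq T01 k) => [<-|n1]; first by rewrite /= mulr1 mulr0 addr0.
case: (eqVneq T10 k) => [<-|n2]; first by rewrite /= mulr1 mulr0 add0r.
rewrite !mulr0 addr0; apply: mcoeff_outdom; apply/negP => /Hf /andP [rk pk].
by case: (red2 rk pk) => e; [move: n1|move: n2]; rewrite e eqxx.
Qed.

Lemma lx2 (X : choiceType) (h : ptree -> {malg K[X]}) a b x z :
  lx h (a *: tr K x + b *: tr K z) = a *: h x + b *: h z.
Proof. by rewrite lxD !lxZ !lxU. Qed.

Lemma c2 (X : choiceType) k a b (u v : {malg K[X]}) :
  (a *: u + b *: v)@_k = a * u@_k + b * v@_k.
Proof. by rewrite mcoeffD !mcoeffZ. Qed.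

Lemma mU (X : choiceType) (x k : X) : (<< x >> : {malg K[X]})@_k = (x == k)%:R.
Proof. exact: mcoeffU. Qed.

Lemma alg4 (a b c1 c2 m1 m2 m3 m4 : K) : c1 = 1 -> c2 = 1 -> m1 = 0 -> m2 = 0 ->
  m3 = 0 -> m4 = 0 -> a * c1 + b * c2 = (a * m1 + b * m2) + (a * m3 + b * m4) -> b = - a.
Proof.
move=> -> -> -> -> -> ->; rewrite !mulr1 !mulr0 !addr0 => H.
by apply/eqP; rewrite -addr_eq0 addrC H.
Qed.

Lemma c22 (X : choiceType) k a b (u v w z : {malg K[X]}) :
  ((a *: u + b *: v) + (a *: w + b *: z))@_k = (a * u@_k + b * v@_k) + (a * w@_k + b * z@_k).
Proof. by rewrite mcoeffD !c2. Qed.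

Lemma prim2_eq a b t1 t2 : primitive (a *: tr K t1 + b *: tr K t2) ->
  a *: interp K (dcomp t1) + b *: interp K (dcomp t2) =
  (a *: << (t1, PEmpty) >> + b *: << (t2, PEmpty) >>) +
  (a *: << (PEmpty, t1) >> + b *: << (PEmpty, t2) >>).
Proof.
rewrite /primitive /coadd /tens_one /one_tens 3!linextE lx2 lx2 lx2.
by rewrite (delta_dcomp K t1) (delta_dcomp K t2).
Qed.

Lemma p2_abstract (a b : K) (D1 D2 : seq (int * (ptree * ptree))) (k0 x1 x2 y1 y2 : ptree * ptree) :
  coefl D1 k0 = 1 -> coefl D2 k0 = 1 -> (x1 == k0) = false -> (x2 == k0) = false ->
  (y1 == k0) = false -> (y2 == k0) = false ->
  a *: interp K D1 + b *: interp K D2 = (a *: << x1 >> + b *: << x2 >>) + (a *: << y1 >> + b *: << y2 >>) ->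
  b = - a.
Proof.
move=> h1 h2 e1 e2 e3 e4 /(congr1 (mcoeff k0)); rewrite c2 c22.
apply: alg4.
- by rewrite interp_coef h1 i1.
- by rewrite interp_coef h2 i1.
- by rewrite mU e1.
- by rewrite mU e2.
- by rewrite mU e3.
- by rewrite mU e4.
Qed.

Lemma p2_prim (f : Alg K) : multilinear 2 f -> primitive f -> f@_T10 = - f@_T01.
Proof.
move=> Hf Hp.
have Hp' : primitive (f@_T01 *: tr K T01 + f@_T10 *: tr K T10) by rewrite -(p2_form Hf).
apply: (p2_abstract (k0 := (PLeaf 0, PLeaf 1)) _ _ _ _ _ _ (prim2_eq Hp')).
- by vm_compute.
- by vm_compute.
- by [].
- by [].
- by [].
- by [].
Qed.

Lemma veeB (u v : Alg K) :
  vee [:: u; v] = lx (fun x => lx (fun z => tr K (graft [:: x; z])) v) u.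
Proof.
rewrite /vee mlin_cons; apply: lx_ext => x; rewrite mlin_cons; apply: lx_ext => z.
by rewrite mlin_nil.
Qed.

Lemma BDl (u1 u2 v : Alg K) : vee [:: u1 + u2; v] = vee [:: u1; v] + vee [:: u2; v].
Proof. by rewrite !veeB lxD. Qed.
Lemma BZl c (u v : Alg K) : vee [:: c *: u; v] = c *: vee [:: u; v].
Proof. by rewrite !veeB lxZ. Qed.
Lemma BDr (u v1 v2 : Alg K) : vee [:: u; v1 + v2] = vee [:: u; v1] + vee [:: u; v2].
Proof. by rewrite !veeB -lx_addf; apply: lx_ext => x; rewrite lxD. Qed.
Lemma BZr c (u v : Alg K) : vee [:: u; c *: v] = c *: vee [:: u; v].
Proof. by rewrite !veeB -lx_scalef; apply: lx_ext => x; rewrite lxZ. Qed.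

Lemma graft2n x z : x != PEmpty -> z != PEmpty -> graft [:: x; z] = PNode [:: x; z].
Proof. by move=> hx hz; rewrite /graft /= hx hz. Qed.

Lemma goodt_ne t : goodt t -> t != PEmpty.
Proof. by case: t. Qed.

Lemma good_Bym m : good m -> good (vee [:: yv; m]).
Proof.
move=> Hm; rewrite veeB lxU; apply: SP_lx => z /Hm gz; apply: SPU.
have hz := goodt_ne gz; rewrite graft2n //; move: gz => /andP [h _].
apply/andP; split; first by rewrite nl_node /=; lia.
by apply/eqP => E; have := congr1 firstleaf E.
Qed.

Lemma good_Bmy m : good m -> good (vee [:: m; yv]).
Proof.
move=> Hm; rewrite veeB; apply: SP_lx => z /Hm gz; rewrite lxU; apply: SPU.
have hz := goodt_ne gz; rewrite graft2n //; move: gz => /andP [h _].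
apply/andP; split; first by rewrite nl_node /=; lia.
by apply/eqP => E; have := congr1 lastleaf E.
Qed.

Lemma good_Bmm (m m' : Alg K) : good m -> good m' -> good (vee [:: m; m']).
Proof.
move=> Hm Hm'; rewrite veeB; apply: SP_lx => z /Hm gz; apply: SP_lx => z' /Hm' gz'.
apply: SPU; have hz := goodt_ne gz; have hz' := goodt_ne gz'; rewrite graft2n //.
move: gz gz' => /andP [h _] /andP [h' _].
apply/andP; split; first by rewrite nl_node /=; lia.
by apply/eqP => e; move: (congr1 nl e); rewrite nl_Tst nl_node /=; lia.
Qed.

Lemma W_split w : W w -> exists c m, w = c *: yv + m /\ good m.
Proof. by move=> [c Hc]; exists c, (w - c *: yv); rewrite addrC subrK. Qed.

Lemma W_B a0 a1 : W a0 -> W a1 -> exists c0 c1,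
  good (vee [:: a0; a1] - (c0 * c1) *: vee [:: yv; yv]) /\
  good (vee [:: a1; a0] - (c1 * c0) *: vee [:: yv; yv]).
Proof.
move=> /W_split [c0 [m0 [-> g0]]] /W_split [c1 [m1 [-> g1]]]; exists c0, c1.
rewrite !BDl !BZl !BDr !BZr !scalerDr !scalerA !tmpAC.
by split; apply: SPD; [apply: SPZ; apply: good_Bym| apply: SPD; [apply: SPZ; apply: good_Bmy|apply: good_Bmm] | apply: SPZ; apply: good_Bym| apply: SPD; [apply: SPZ; apply: good_Bmy|apply: good_Bmm]].
Qed.

Lemma W_p2 (f : Alg K) a : multilinear 2 f -> primitive f ->
  (forall i, W (a i)) -> W (subst a f).
Proof.
move=> Hf Hp Ha; rewrite (p2_form Hf) (p2_prim Hf Hp) substD !substZ !subst_tr /=.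
exists 0; rewrite scale0r subr0 scaleNr -scalerBr; apply: SPZ.
have [c0 [c1 [G1 G2]]] := W_B (Ha 0%N) (Ha 1%N).
have -> : vee [:: a 0%N; a 1%N] - vee [:: a 1%N; a 0%N] =
  (vee [:: a 0%N; a 1%N] - (c0 * c1) *: vee [:: yv; yv]) -
  (vee [:: a 1%N; a 0%N] - (c1 * c0) *: vee [:: yv; yv]).
  by rewrite mulrC opprB addrA subrK.
exact: SPB.
Qed.

Lemma gen_inv (P : nat -> Alg K -> Prop) :
  (forall f, P 2%N f -> multilinear 2 f /\ primitive f) ->
  (forall f, P 3%N f -> multilinear 3 f) ->
  forall n f, gen23 P n f -> forall a, (forall i, W (a i)) -> W (subst a f).
Proof.
move=> H2 H3 n0 f0 Hg; elim: Hg => [|f Pf|f Pf|k f gs ns _ IHf sg sn _ IHg|n f s _ IH|n|n c f g _ IHf _ IHg] a Ha.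
- by rewrite /xvar subst_tr; apply: Ha.
- by case: (H2 f Pf) => ml pr; apply: W_p2.
- exact: W_p3 (H3 f Pf) Ha.
- rewrite /ocomp subst_subst; apply: IHf => i.
  case: (ltnP i k) => hi.
    by rewrite subst_rename; apply: IHg.
  by rewrite nth_default ?sg // /rename !subst0; apply: W0.
- by rewrite subst_rename; apply: IH.
- by rewrite subst0; apply: W0.
- by rewrite substD substZ; apply: W_lin; [apply: IHf|apply: IHg].
Qed.

End P2.


Definition Lf (i : nat) := PLeaf i.
Definition N2 a b := PNode [:: a; b].

Definition lf : seq (int * ptree) :=
  [:: (-1, N2 (Lf 0) (N2 (Lf 3) (N2 (Lf 1) (Lf 2))));
      (1, N2 (Lf 1) (N2 (Lf 0) (N2 (Lf 3) (Lf 2))));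
      (1, N2 (Lf 2) (N2 (Lf 0) (N2 (Lf 3) (Lf 1))));
      (-1, N2 (Lf 1) (N2 (N2 (Lf 0) (Lf 3)) (Lf 2)));
      (-1, N2 (Lf 2) (N2 (N2 (Lf 0) (Lf 3)) (Lf 1)));
      (1, N2 (N2 (Lf 0) (Lf 3)) (N2 (Lf 1) (Lf 2)))]%Z.

Fixpoint relab (t : ptree) : ptree :=
  match t with
  | PEmpty => PEmpty
  | PLeaf _ => L0
  | PNode ts => graft (map relab ts)
  end.

Section Final.
Variable K : fieldType.

Lemma SP_interp (X : choiceType) (P : X -> Prop) (l : seq (int * X)) :
  (forall p, p \in l -> P p.2) -> SP P (interp K l).
Proof. by move=> H; apply: SP_sum => p pl; apply: SPZ; apply: SPU; apply: H. Qed.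

Lemma f_prim : primitive (interp K lf).
Proof.
rewrite /primitive coadd_interp tens_one_interp one_tens_interp -interp_cat.
by apply: checkeqP; vm_compute.
Qed.

Lemma f_PrimMag : PrimMag 4 (interp K lf).
Proof.
split; last exact: f_prim.
- apply: SP_interp => p.
  have : all (fun p : int * ptree => reduced p.2 && perm_eq (leaves p.2) (iota 0 4)) lf.
    by vm_compute.
  by move/allP => H /H.
- apply: SP_interp => p.
  have : all (fun p : int * ptree => binary p.2) lf by vm_compute.
  by move/allP => H /H.
Qed.

Lemma subst_y t : subst_t (fun _ => yv K) t = tr K (relab t).
Proof.
elim/ptree_ind2: t => [|i|ts IH] //=.
have -> : map (subst_t (fun _ => yv K)) ts = map (fun x => << x >>) (map relab ts).
  by rewrite -map_comp; apply/eq_in_map => t /(allP_in IH).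
by rewrite /vee mlin_U.
Qed.

Lemma subst_y_interp (l : seq (int * ptree)) :
  subst (fun _ => yv K) (interp K l) = interp K [seq (p.1, relab p.2) | p <- l].
Proof.
rewrite /subst linextE /interp lx_sum big_map; apply: eq_bigr => p _.
by rewrite lxZ lxU subst_y.
Qed.

Lemma W_coef (L : seq (int * ptree)) : coefl L Tst = 1 -> ~ W (interp K L).
Proof.
move=> h [c Hc].
have : Tst \notin msupp (interp K L - c *: yv K).
  by apply/negP => /Hc /andP [_ /eqP].
move/mcoeff_outdom; rewrite mcoeffB mcoeffZ interp_coef h i1 /yv /tr mU.
have -> : (L0 == Tst) = false by [].
by rewrite mulr0 subr0 => /eqP; rewrite oner_eq0.
Qed.

Lemma f_notW : ~ W (subst (fun _ => yv K) (interp K lf)).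
Proof. by rewrite subst_y_interp; apply: W_coef; vm_compute. Qed.

End Final.

Theorem corollary4p5p8 (K : fieldType) (charK0 : [pchar K]%R =i pred0) :
  ~ (forall f : Alg K, PrimMag 4 f -> gen23 (@PrimMag K) 4 f) /\
  ~ (forall f : Alg K, PrimMagw 4 f -> gen23 (@PrimMagw K) 4 f).
Proof.
have Pf := f_PrimMag K.
have Pw : PrimMagw 4 (interp K lf).
  case: Pf => a b c; split; [exact: a | exact: c].
have H2 : forall f : Alg K, PrimMag 2 f -> multilinear 2 f /\ primitive f.
  move=> g Hg; case: Hg => a b c; split; [exact: a | exact: c].
have H3 : forall f : Alg K, PrimMag 3 f -> multilinear 3 f.
  move=> g Hg; case: Hg => a b c; exact: a.
have H2w : forall f : Alg K, PrimMagw 2 f -> multilinear 2 f /\ primitive f.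
  move=> g Hg; case: Hg => a c; split; [exact: a | exact: c].
have H3w : forall f : Alg K, PrimMagw 3 f -> multilinear 3 f.
  move=> g Hg; case: Hg => a c; exact: a.
split => H.
- exact: (f_notW (gen_inv H2 H3 (H _ Pf) (fun _ => W_y K))).
- exact: (f_notW (gen_inv H2w H3w (H _ Pw) (fun _ => W_y K))).
Qed.
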